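(* The limit $\displaystyle\lim_{n\to\infty}\Big(\operatorname{li}(n)-\sum_{k=1}^n\frac{1}{H_k-\gamma}\Big)$ (over positive integers $n$) exists, where $\operatorname{li}(x)=\int_0^x\frac{dt}{\log t}$ (Cauchy principal value), $H_k=\sum_{j=1}^k\frac1j$, and $\gamma$ is the Euler–Mascheroni constant. *)

(* Defs.v *)
From Stdlib Require Import Reals.
From Coquelicot Require Import Coquelicot.
Open Scope R_scope.

Fixpoint harmonic (k : nat) : R :=
  match k with
  | O => 0
  | S k' => harmonic k' + / INR (S k')
  end.

Definition euler_gamma : R := real (Lim_seq (fun n => harmonic n - ln (INR n))).

(* Logarithmic integral li(x) = p.v. int_0^x dt / log t, i.e. the limit as
   eps -> 0+ of  int_0^{1-eps} dt/log t + int_{1+eps}^x dt/log t  (x > 1). *)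
Definition li (x : R) : R :=
  real (Lim (fun eps => RInt (fun t => / ln t) 0 (1 - Rabs eps)
                        + RInt (fun t => / ln t) (1 + Rabs eps) x) 0).

(* Main.v *)
Require Import Defs.
From Stdlib Require Import Reals.
From Coquelicot Require Import Coquelicot.
From Stdlib Require Import Lra Lia.
Open Scope R_scope.

Definition u (t : R) : R := / ln t.

Lemma ln_le_sub1 z : 0 < z -> ln z <= z - 1.
Proof.
  intros Hz. rewrite <- (ln_exp (z - 1)). apply ln_le; auto.
  generalize (exp_ineq1_le (z - 1)); lra.
Qed.

Lemma ln_ge_1inv z : 0 < z -> 1 - / z <= ln z.
Proof.
  intros Hz. generalize (ln_le_sub1 (/ z) (Rinv_0_lt_compat _ Hz)).
  rewrite ln_Rinv; auto. lra.
Qed.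

Lemma ln_neq0 z : 0 < z -> z <> 1 -> ln z <> 0.
Proof.
  intros Hz H1 H. apply H1. apply ln_inv; auto; try lra. rewrite ln_1; auto.
Qed.

Lemma cont_u z : 0 < z -> z <> 1 -> continuous u z.
Proof.
  intros Hz H1. apply (ex_derive_continuous (K:=R_AbsRing) (V:=R_NormedModule)). unfold u.
  auto_derive. split; auto. split; auto. apply ln_neq0; auto.
Qed.

Lemma ln_nonpos z : z <= 0 -> ln z = 0.
Proof.
  intros H. unfold ln. destruct (Rlt_dec 0 z); auto. exfalso; lra.
Qed.

Lemma cont_u0 : continuous u 0.
Proof.
  unfold continuous. apply filterlim_locally. intros eps.
  unfold u at 1. rewrite ln_nonpos; [|lra]. rewrite Rinv_0.
  assert (Hd : 0 < exp (- / eps)) by apply exp_pos.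
  exists (mkposreal _ Hd). intros y Hy.
  change (Rabs (y + - 0) < exp (- / eps)) in Hy. rewrite Ropp_0, Rplus_0_r in Hy.
  change (Rabs (u y + - 0) < eps). rewrite Ropp_0, Rplus_0_r.
  destruct (Rle_or_lt y 0) as [Hy0|Hy0].
  - unfold u. rewrite ln_nonpos; auto. rewrite Rinv_0. rewrite Rabs_R0. apply cond_pos.
  - rewrite Rabs_pos_eq in Hy; [|lra].
    assert (Hl : ln y < - / eps).
    { rewrite <- (ln_exp (- / eps)). apply ln_increasing; auto. }
    assert (Hie : 0 < / eps) by (apply Rinv_0_lt_compat, cond_pos).
    unfold u. rewrite Rabs_left.
    2: { apply Rinv_lt_0_compat. lra. }
    rewrite <- Rinv_opp. rewrite <- (Rinv_inv eps).
    apply Rinv_lt_contravar. apply Rmult_lt_0_compat; lra. lra.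
Qed.

Lemma cont_u_low z : 0 <= z < 1 -> continuous u z.
Proof.
  intros [H0 H1]. destruct (Req_dec z 0) as [->|Hz]. apply cont_u0.
  apply cont_u; lra.
Qed.

Lemma ex_u_low a b : 0 <= a <= b -> b < 1 -> ex_RInt u a b.
Proof.
  intros Hab Hb. apply (ex_RInt_continuous (V:=R_CompleteNormedModule)). intros z Hz.
  rewrite Rmin_left in Hz by lra. rewrite Rmax_right in Hz by lra.
  apply cont_u_low; lra.
Qed.

Lemma ex_u_high a b : 1 < a <= b -> ex_RInt u a b.
Proof.
  intros Hab. apply (ex_RInt_continuous (V:=R_CompleteNormedModule)). intros z Hz.
  rewrite Rmin_left in Hz by lra. rewrite Rmax_right in Hz by lra.
  apply cont_u; lra.
Qed.

Lemma ln_pos' z : 1 < z -> 0 < ln z.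
Proof. intros; rewrite <- ln_1; apply ln_increasing; lra. Qed.

Lemma ln_neg' z : 0 < z < 1 -> ln z < 0.
Proof. intros; rewrite <- ln_1; apply ln_increasing; lra. Qed.

Lemma u_decr s t : 1 < s <= t -> u t <= u s.
Proof.
  intros H. unfold u. apply Rinv_le_contravar. apply ln_pos'; lra.
  destruct (Req_dec s t) as [->|]. lra. left; apply ln_increasing; lra.
Qed.

Lemma u_pos t : 1 < t -> 0 < u t.
Proof. intros; unfold u; apply Rinv_0_lt_compat, ln_pos'; auto. Qed.

Lemma u_left_bounds s : 0 < s < 1 -> - / s <= u (1 - s) <= - / s + 2.
Proof.
  intros Hs. set (t := 1 - s). assert (Ht : 0 < t < 1) by (unfold t; lra).
  assert (HL := ln_neg' t Ht). assert (H1 := ln_le_sub1 t (proj1 Ht)).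
  assert (H2 := ln_ge_1inv t (proj1 Ht)).
  unfold u. split.
  -
    replace (- / s) with (/ (- s)) by (field; lra).
    assert (ln t <= - s) by (unfold t in *; lra).
    rewrite <- (Ropp_involutive (/ ln t)), <- Rinv_opp.
    rewrite <- (Ropp_involutive (/ (- s))), <- (Rinv_opp (- s)).
    apply Ropp_le_contravar. apply Rinv_le_contravar; lra.
  - destruct (Rle_or_lt t (1/2)).
    + assert (/ ln t < 0) by (apply Rinv_lt_0_compat; lra).
      assert (/ s <= 2).
      { replace 2 with (/ (1/2)) by field. apply Rinv_le_contravar; unfold t in *; lra. }
      lra.
    +
      assert (Hq : - s / t <= ln t).
      { replace (- s / t) with (1 - / t) by (unfold t; field; lra). auto. }
      assert (H3 : / ln t <= / (- s / t)).
      { rewrite <- (Ropp_involutive (/ ln t)), <- Rinv_opp.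
        rewrite <- (Ropp_involutive (/ (- s / t))), <- (Rinv_opp (- s / t)).
        apply Ropp_le_contravar. apply Rinv_le_contravar.
        - lra.
        - assert (0 < s / t) by (apply Rdiv_lt_0_compat; lra). lra. }
      replace (/ (- s / t)) with (- / s + 1) in H3 by (unfold t in *; field; lra).
      lra.
Qed.

Lemma u_right_bounds s : 0 < s -> / s <= u (1 + s) <= / s + 1.
Proof.
  intros Hs. set (t := 1 + s). assert (Ht : 1 < t) by (unfold t; lra).
  assert (HL := ln_pos' t Ht). assert (H1 := ln_le_sub1 t ltac:(lra)).
  assert (H2 := ln_ge_1inv t ltac:(lra)).
  unfold u. split.
  - apply Rinv_le_contravar; auto. unfold t in *; lra.
  - assert (Hq : s / t <= ln t).
    { replace (s / t) with (1 - / t) by (unfold t; field; lra). auto. }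
    assert (H : / ln t <= / (s / t)).
    { apply Rinv_le_contravar; auto. apply Rdiv_lt_0_compat; lra. }
    replace (/ (s / t)) with (/ s + 1) in H by (unfold t in *; field; lra).
    lra.
Qed.

Lemma h_bounds s : 0 < s < 1 -> 0 <= u (1 - s) + u (1 + s) <= 3.
Proof.
  intros Hs. assert (A1 := u_left_bounds s Hs). assert (A2 := u_right_bounds s (proj1 Hs)).
  lra.
Qed.

Lemma incr_ge (v : nat -> R) : (forall n, v n <= v (S n)) -> forall k n, v k <= v (n + k)%nat.
Proof.
  intros H k n. induction n. simpl; lra. simpl. specialize (H (n + k)%nat). lra.
Qed.

Lemma decr_le (v : nat -> R) : (forall n, v (S n) <= v n) -> forall k n, v (n + k)%nat <= v k.
Proof.
  intros H k n. induction n. simpl; lra. simpl. specialize (H (n + k)%nat). lra.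
Qed.

Lemma conv_of_bound (x w : nat -> R) :
  (forall n, Rabs (x (S n) - x n) <= w n - w (S n)) -> (forall n, 0 <= w n) ->
  ex_finite_lim_seq x.
Proof.
  intros Hb Hw.
  assert (Hwd : forall n, w (S n) <= w n).
  { intros n. generalize (Hb n) (Rabs_pos (x (S n) - x n)). lra. }
  assert (HA : forall n, x (S n) + w (S n) <= x n + w n).
  { intros n. generalize (Hb n) (Rle_abs (x (S n) - x n)). lra. }
  assert (HB : forall n, x n - w n <= x (S n) - w (S n)).
  { intros n. generalize (Hb n) (Rle_abs (- (x (S n) - x n))). rewrite Rabs_Ropp. lra. }
  destruct (ex_finite_lim_seq_decr w 0 Hwd Hw) as [lw Hlw].
  destruct (ex_finite_lim_seq_decr (fun n => x n + w n) (x 0%nat - w 0%nat) HA) as [lA HlA].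
  { intros n. generalize (incr_ge (fun n => x n - w n) HB 0 n) (Hw n).
    rewrite Nat.add_0_r. simpl. lra. }
  exists (lA - lw).
  apply is_lim_seq_ext with (fun n => (x n + w n) - w n).
  { intros; ring. }
  apply is_lim_seq_minus'; auto.
Qed.

Lemma cont_1ms z : 0 < z <= 1 -> continuous (fun s => u (1 - s)) z.
Proof.
  intros Hz.
  apply (continuous_comp (U:=R_UniformSpace) (V:=R_UniformSpace) (W:=R_UniformSpace) (fun s => 1 - s) u).
  - apply (ex_derive_continuous (K:=R_AbsRing) (V:=R_NormedModule)). auto_derive; auto.
  - apply cont_u_low; lra.
Qed.

Lemma cont_1ps z : 0 < z -> continuous (fun s => u (1 + s)) z.
Proof.
  intros Hz.
  apply (continuous_comp (U:=R_UniformSpace) (V:=R_UniformSpace) (W:=R_UniformSpace) (fun s => 1 + s) u).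
  - apply (ex_derive_continuous (K:=R_AbsRing) (V:=R_NormedModule)). auto_derive; auto.
  - apply cont_u; lra.
Qed.

Lemma ex_h b a : 0 < b <= a -> a <= 1 -> ex_RInt (fun s => u (1 - s) + u (1 + s)) b a.
Proof.
  intros Hab Ha. apply (ex_RInt_continuous (V:=R_CompleteNormedModule)). intros z Hz.
  rewrite Rmin_left in Hz by lra. rewrite Rmax_right in Hz by lra.
  apply (continuous_plus (K:=R_AbsRing) (V:=R_NormedModule) (fun s => u (1 - s)) (fun s => u (1 + s))).
  apply cont_1ms; lra. apply cont_1ps; lra.
Qed.

Lemma sub_left a b : 0 < b <= a -> a <= 1 ->
  RInt u (1 - a) (1 - b) = RInt (fun s => u (1 - s)) b a.
Proof.
  intros Hab Ha.
  assert (E1 : ex_RInt u (1 - a) (1 - b)) by (apply ex_u_low; lra).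
  assert (E2 : ex_RInt (fun s => u (1 - s)) b a).
  { apply (ex_RInt_continuous (V:=R_CompleteNormedModule)). intros z Hz.
    rewrite Rmin_left in Hz by lra. rewrite Rmax_right in Hz by lra. apply cont_1ms; lra. }
  assert (E3 : ex_RInt u (-1 * b + 1) (-1 * a + 1)).
  { replace (-1 * b + 1) with (1 - b) by ring. replace (-1 * a + 1) with (1 - a) by ring.
    apply ex_RInt_swap; auto. }
  generalize (RInt_comp_lin (V:=R_CompleteNormedModule) u (-1) 1 b a E3). intros H.
  replace (-1 * b + 1) with (1 - b) in H by ring. replace (-1 * a + 1) with (1 - a) in H by ring.
  rewrite <- (opp_RInt_swap (V:=R_CompleteNormedModule) u (1 - a) (1 - b)) in H by auto.
  rewrite (RInt_ext (V:=R_CompleteNormedModule) _ (fun y => opp (u (1 - y)))) in H.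
  2: { intros x _. unfold scal; simpl. unfold mult, opp; simpl. f_equal.
       replace (-1 * x + 1) with (1 - x) by ring. ring. }
  rewrite (RInt_opp (V:=R_CompleteNormedModule)) in H by auto.
  unfold opp in H; simpl in H. lra.
Qed.

Lemma sub_right a b : 0 < b <= a ->
  RInt u (1 + b) (1 + a) = RInt (fun s => u (1 + s)) b a.
Proof.
  intros Hab.
  assert (E3 : ex_RInt u (1 * b + 1) (1 * a + 1)).
  { replace (1 * b + 1) with (1 + b) by ring. replace (1 * a + 1) with (1 + a) by ring.
    apply ex_u_high; lra. }
  generalize (RInt_comp_lin (V:=R_CompleteNormedModule) u 1 1 b a E3). intros H.
  replace (1 * b + 1) with (1 + b) in H by ring. replace (1 * a + 1) with (1 + a) in H by ring.
  rewrite <- H. apply RInt_ext. intros x _. unfold scal; simpl. unfold mult; simpl.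
  replace (1 * x + 1) with (1 + x) by ring. ring.
Qed.

Definition e (n : nat) : R := / (INR n + 1).

Lemma e_bounds n : 0 < e (S n) < e n /\ e n <= 1.
Proof.
  unfold e. rewrite S_INR. assert (H := pos_INR n). split. split.
  apply Rinv_0_lt_compat; lra. apply Rinv_lt_contravar; nra.
  rewrite <- Rinv_1. apply Rinv_le_contravar; lra.
Qed.

Definition Fe (n : nat) : R := RInt u 0 (1 - e n) + RInt u (1 + e n) 2.

Lemma Fe_step n : Fe (S n) - Fe n = RInt (fun s => u (1 - s) + u (1 + s)) (e (S n)) (e n).
Proof.
  destruct (e_bounds n) as [[H0 H1] H2].
  set (a := e n) in *. set (b := e (S n)) in *. unfold Fe. fold a b.
  rewrite <- (RInt_Chasles (V:=R_CompleteNormedModule) u 0 (1 - a) (1 - b)) by (apply ex_u_low; lra).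
  rewrite <- (RInt_Chasles (V:=R_CompleteNormedModule) u (1 + b) (1 + a) 2) by (apply ex_u_high; lra).
  unfold plus; simpl.
  rewrite sub_left by lra. rewrite sub_right by lra.
  rewrite (RInt_plus (V:=R_CompleteNormedModule) (fun s => u (1 - s)) (fun s => u (1 + s))).
  unfold plus; simpl. ring.
  - apply (ex_RInt_continuous (V:=R_CompleteNormedModule)). intros z Hz.
    rewrite Rmin_left in Hz by lra. rewrite Rmax_right in Hz by lra. apply cont_1ms; lra.
  - apply (ex_RInt_continuous (V:=R_CompleteNormedModule)). intros z Hz.
    rewrite Rmin_left in Hz by lra. rewrite Rmax_right in Hz by lra. apply cont_1ps; lra.
Qed.

Lemma Fe_conv : ex_finite_lim_seq Fe.
Proof.
  apply conv_of_bound with (w := fun n => 3 * e n).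
  - intros n. rewrite Fe_step. destruct (e_bounds n) as [[H0 H1] H2].
    assert (Hex := ex_h (e (S n)) (e n) ltac:(lra) H2).
    assert (L : RInt (fun _ => 0) (e (S n)) (e n) <= RInt (fun s => u (1 - s) + u (1 + s)) (e (S n)) (e n)).
    { apply RInt_le; auto. lra. apply ex_RInt_const. intros x Hx. apply h_bounds; lra. }
    assert (U : RInt (fun s => u (1 - s) + u (1 + s)) (e (S n)) (e n) <= RInt (fun _ => 3) (e (S n)) (e n)).
    { apply RInt_le; auto. lra. apply ex_RInt_const. intros x Hx. apply h_bounds; lra. }
    rewrite RInt_const in L, U. unfold scal in L, U; simpl in L, U. unfold mult in L, U; simpl in L, U.
    rewrite Rabs_pos_eq by lra. lra.
  - intros n. destruct (e_bounds n). lra.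
Qed.

Lemma li_eq : exists l, forall x, 2 <= x -> li x = l + RInt u 2 x.
Proof.
  destruct Fe_conv as [l Hl]. exists l. intros x Hx. unfold li, Lim.
  change (fun t => / ln t) with u.
  rewrite (Lim_seq_ext _ (fun n => Fe n + RInt u 2 x)).
  - rewrite (is_lim_seq_unique _ (l + RInt u 2 x)). reflexivity.
    apply is_lim_seq_plus'; auto. apply is_lim_seq_const.
  - intros n. simpl Rbar_loc_seq. destruct (e_bounds n) as [[H0 H1] H2].
    replace (Rabs (0 + / (INR n + 1))) with (e n).
    2: { unfold e. rewrite Rplus_0_l, Rabs_pos_eq; auto. fold (e n); lra. }
    unfold Fe.
    rewrite <- (RInt_Chasles (V:=R_CompleteNormedModule) u (1 + e n) 2 x).
    + unfold plus; simpl. ring.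
    + apply ex_u_high; lra.
    + apply ex_u_high; lra.
Qed.

Lemma ln_diff x y : 0 < x -> 0 < y -> (y - x) / y <= ln y - ln x <= (y - x) / x.
Proof.
  intros Hx Hy. rewrite <- ln_div by auto. split.
  - generalize (ln_ge_1inv (y / x) ltac:(apply Rdiv_lt_0_compat; auto)).
    replace (1 - / (y / x)) with ((y - x) / y) by (field; lra). auto.
  - generalize (ln_le_sub1 (y / x) ltac:(apply Rdiv_lt_0_compat; auto)).
    replace (y / x - 1) with ((y - x) / x) by (field; lra). auto.
Qed.

Definition ga (n : nat) : R := harmonic (S n) - ln (INR (S n)).
Definition gb (n : nat) : R := harmonic (S n) - ln (INR (S n) + 1).

Lemma ga_decr n : ga (S n) <= ga n.
Proof.
  unfold ga. change (harmonic (S (S n))) with (harmonic (S n) + / INR (S (S n))).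
  assert (H := pos_INR n). rewrite !S_INR.
  destruct (ln_diff (INR n + 1) (INR n + 1 + 1)) as [H1 _]; try lra.
  all: try (replace (INR n + 1 + 1 - (INR n + 1)) with 1 in H1 by ring;
  unfold Rdiv in H1; rewrite Rmult_1_l in H1; lra).
Qed.

Lemma gb_incr n : gb n <= gb (S n).
Proof.
  unfold gb. change (harmonic (S (S n))) with (harmonic (S n) + / INR (S (S n))).
  assert (H := pos_INR n). rewrite !S_INR.
  destruct (ln_diff (INR n + 1 + 1) (INR n + 1 + 1 + 1)) as [_ H1]; try lra.
  all: try (replace (INR n + 1 + 1 + 1 - (INR n + 1 + 1)) with 1 in H1 by ring;
  unfold Rdiv in H1; rewrite Rmult_1_l in H1; lra).
Qed.

Lemma gb_le_ga n : gb n <= ga n.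
Proof.
  unfold ga, gb. assert (H := pos_INR n). rewrite S_INR.
  assert (ln (INR n + 1) < ln (INR n + 1 + 1)) by (apply ln_increasing; lra). lra.
Qed.

Lemma gamma_bounds : forall k, gb k <= euler_gamma <= ga k.
Proof.
  destruct (ex_finite_lim_seq_decr ga (gb 0%nat) ga_decr) as [g Hg].
  { intros n. generalize (incr_ge gb gb_incr 0 n) (gb_le_ga n). rewrite Nat.add_0_r. lra. }
  assert (Hgam : euler_gamma = g).
  { unfold euler_gamma. rewrite (is_lim_seq_unique _ g). reflexivity.
    apply is_lim_seq_incr_1. exact Hg. }
  rewrite Hgam. intros k. split.
  - assert (Hr : Rbar_le (gb k) g).
    { apply is_lim_seq_le with (fun _ => gb k) (fun n => ga (n + k)%nat).
      + intros n. generalize (incr_ge gb gb_incr k n) (gb_le_ga (n + k)). lra.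
      + apply is_lim_seq_const.
      + apply (is_lim_seq_incr_n ga k). auto. }
    exact Hr.
  - assert (Hr : Rbar_le g (ga k)).
    { apply is_lim_seq_le with (fun n => ga (n + k)%nat) (fun _ => ga k).
      + intros n. apply (decr_le ga ga_decr k n).
      + apply (is_lim_seq_incr_n ga k). auto.
      + apply is_lim_seq_const. }
    exact Hr.
Qed.

Lemma f_bounds K : (2 <= K)%nat ->
  u (INR K + 1) <= / (harmonic K - euler_gamma) <= u (INR K).
Proof.
  intros HK. destruct K as [|k]; [lia|].
  destruct (gamma_bounds k) as [H1 H2]. unfold ga, gb in *.
  assert (Hk : 2 <= INR (S k)) by (apply (le_INR 2); auto).
  assert (P := ln_pos' (INR (S k)) ltac:(lra)).
  unfold u. split; apply Rinv_le_contravar; lra.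
Qed.

Lemma int_bounds a : 1 < a -> u (a + 1) <= RInt u a (a + 1) <= u a.
Proof.
  intros Ha. assert (Ex := ex_u_high a (a + 1) ltac:(lra)).
  assert (L : RInt (fun _ => u (a + 1)) a (a + 1) <= RInt u a (a + 1)).
  { apply RInt_le; auto. lra. apply ex_RInt_const. intros t Ht. apply u_decr; lra. }
  assert (U : RInt u a (a + 1) <= RInt (fun _ => u a) a (a + 1)).
  { apply RInt_le; auto. lra. apply ex_RInt_const. intros t Ht. apply u_decr; lra. }
  rewrite RInt_const in L, U. unfold scal in L, U; simpl in L, U. unfold mult in L, U; simpl in L, U.
  replace (a + 1 - a) with 1 in L, U by ring. lra.
Qed.

Theorem lemma7p12 :
  exists l : R,
    is_lim_seq
      (fun n : nat => li (INR n) - sum_n_m (fun k => / (harmonic k - euler_gamma)) 1 n)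
      l.
Proof.
  destruct li_eq as [l0 Hli].
  set (f := fun k => / (harmonic k - euler_gamma)).
  set (d := fun n : nat => li (INR n) - sum_n_m f 1 n).
  set (I := fun n : nat => RInt u (INR (n + 2)) (INR (n + 2) + 1)).
  assert (HN : forall n, 2 <= INR (n + 2)).
  { intros n. apply (le_INR 2). lia. }
  assert (HS : forall n, INR (S n + 2) = INR (n + 2) + 1).
  { intros n. change (S n + 2)%nat with (S (n + 2)). apply S_INR. }
  assert (HI : forall n, u (INR (n + 2) + 1) <= I n <= u (INR (n + 2))).
  { intros n. apply int_bounds. generalize (HN n); lra. }
  assert (Hx : ex_finite_lim_seq (fun n => d (n + 2)%nat + I n)).
  { apply conv_of_bound with (w := fun n => u (INR (S n + 2))).
    - intros n.
      assert (Hstep : d (S n + 2)%nat + I (S n) - (d (n + 2)%nat + I n) = I (S n) - f (S n + 2)%nat).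
      { unfold d. rewrite (Hli (INR (S n + 2))) by (generalize (HN (S n)); lra).
        rewrite (Hli (INR (n + 2))) by (generalize (HN n); lra).
        change (S n + 2)%nat with (S (n + 2)).
        rewrite sum_n_Sm by lia.
        rewrite S_INR.
        rewrite <- (RInt_Chasles (V:=R_CompleteNormedModule) u 2 (INR (n + 2)) (INR (n + 2) + 1)).
        - unfold I, plus; simpl. ring.
        - destruct (Req_dec (INR (n + 2)) 2) as [E|E].
          + rewrite E. apply ex_RInt_point.
          + apply ex_u_high. generalize (HN n); lra.
        - apply ex_u_high. generalize (HN n); lra. }
      rewrite Hstep.
      assert (Fb := f_bounds (S n + 2) ltac:(lia)). fold f in Fb.
      assert (Ib := HI (S n)). rewrite HS in Fb, Ib |- *.
      rewrite !HS. unfold f. unfold Rabs; destruct Rcase_abs; lra.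
    - intros n. left. apply u_pos. generalize (HN (S n)); lra. }
  assert (HIc : ex_finite_lim_seq I).
  { apply ex_finite_lim_seq_decr with 0.
    - intros n. generalize (HI n) (HI (S n)). rewrite HS. lra.
    - intros n. generalize (HI n) (u_pos (INR (n + 2) + 1) ltac:(generalize (HN n); lra)). lra. }
  destruct Hx as [lx Hlx]. destruct HIc as [lI HlI].
  exists (lx - lI).
  apply (is_lim_seq_incr_n _ 2).
  apply is_lim_seq_ext with (fun n => (d (n + 2)%nat + I n) - I n).
  { intros n. unfold d, f. ring. }
  apply is_lim_seq_minus'; auto.
Qed.
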